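(* Let $\tau\subseteq\sigma$ be two topologies on a set $X$. If $(X,\tau,\mathcal{HK}_\tau)$ is a $T_{\mathcal{HK}_\tau}$-space, then $(X,\sigma,\mathcal{HK}_\sigma)$ is a $T_{\mathcal{HK}_\sigma}$-space.
   Context: For a topology $\rho$ on $X$, $\mathcal{HK}_\rho$ denotes the ideal of $\rho$-hereditarily compact subsets of $X$, i.e. sets all of whose subsets are $\rho$-compact. For an ideal $\mathcal{I}$, $(X,\rho,\mathcal{I})$ is a $T_{\mathcal{I}}$-space if for every $I\in\mathcal{I}$ and every $x\in X\setminus I$ there is a set $A_x$ with $x\in A_x$, $A_x\cap I=\emptyset$, and $A_x$ $\rho$-open or $\rho$-closed. *)

(* Defs.v *)
From Stdlib Require Import List.

Set Implicit Arguments.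

Definition subset {X : Type} (A B : X -> Prop) : Prop := forall x, A x -> B x.

Definition is_topology {X : Type} (rho : (X -> Prop) -> Prop) : Prop :=
  rho (fun _ => False) /\ rho (fun _ => True) /\
  (forall F : (X -> Prop) -> Prop, (forall U, F U -> rho U) ->
     rho (fun x => exists U, F U /\ U x)) /\
  (forall U V, rho U -> rho V -> rho (fun x => U x /\ V x)).

Definition compact_in {X : Type} (rho : (X -> Prop) -> Prop) (K : X -> Prop) : Prop :=
  forall C : (X -> Prop) -> Prop,
    (forall U, C U -> rho U) ->
    (forall x, K x -> exists U, C U /\ U x) ->
    exists l : list (X -> Prop),
      (forall U, In U l -> C U) /\ (forall x, K x -> exists U, In U l /\ U x).

Definition HK {X : Type} (rho : (X -> Prop) -> Prop) (A : X -> Prop) : Prop :=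
  forall B, subset B A -> compact_in rho B.

Definition T_I_space {X : Type} (rho : (X -> Prop) -> Prop)
    (I : (X -> Prop) -> Prop) : Prop :=
  forall A, I A -> forall x, ~ A x ->
    exists Ax : X -> Prop, Ax x /\ (forall y, Ax y -> ~ A y) /\
      (rho Ax \/ rho (fun y => ~ Ax y)).

(* Main.v *)
Require Import Defs.

Theorem mainTheorem5 (X : Type) (tau sigma : (X -> Prop) -> Prop) :
  is_topology tau -> is_topology sigma ->
  (forall U, tau U -> sigma U) ->
  T_I_space tau (HK tau) -> T_I_space sigma (HK sigma).
Proof.
  intros _ _ Hts HT A HA x Hx.
  assert (HA' : HK tau A).
  { intros B HB C HC Hcov. apply (HA B HB C); auto. }
  destruct (HT A HA' x Hx) as [Ax [H1 [H2 [H3|H3]]]].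
  - exists Ax; auto.
  - exists Ax; auto.
Qed.
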